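(* Let $(P_1,e_1),\dots,(P_\ell,e_\ell)$ be friendly tree patterns and let $n\ge 0$. Then Algorithm S, applied to the set $\mathcal{L}_n=\mathcal{T}_n((P_1,e_1),\dots,(P_\ell,e_\ell))$ and initialized with the right path $T_0\in\mathcal{T}_n$ (the tree in which no vertex has a left child), visits every binary tree from $\mathcal{T}_n((P_1,e_1),\dots,(P_\ell,e_\ell))$ exactly once.
   Context: For $n\ge 0$, $\mathcal{T}_n$ is the set of binary trees with $n$ vertices, labeled $1,\dots,n$ by the search tree property (left-subtree vertices of $i$ are smaller than $i$, right-subtree vertices larger). For a vertex $i$: $c_L(i),c_R(i),p(i)$ are its left child, right child, parent ($\varepsilon$ if nonexistent); $r(T)$ is the root; $T(i)$, $L(i)$, $R(i)$ are the subtrees rooted at $i$, $c_L(i)$, $c_R(i)$. $B_R(i)=\{i,c_R(i),c_R^2(i),\dots\}$ is the vertex set of the right branch starting at $i$, and $B_R^-(i)$ is $B_R(i)$ minus its last vertex. A tree pattern is $(P,e)$ with $P\in\mathcal{T}_k$, $e\colon[k]\setminus\{r(P)\}\to\{0,1\}$. $T\in\mathcal{T}_n$ contains $(P,e)$ if there is an injection $f\colon[k]\to[n]$ such that for every non-root $i$ of $P$: if $e(i)=1$, $f(i)$ is the left (resp. right) child of $f(p(i))$ when $i$ is the left (resp. right) child of $p(i)$; if $e(i)=0$, $f(i)\in L(f(p(i)))$ (resp. $R(f(p(i)))$) when $i$ is the left (resp. right) child of $p(i)$. Otherwise $T$ avoids it. $\mathcal{T}_n((P_1,e_1),\dots,(P_\ell,e_\ell))$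 is the set of trees in $\mathcal{T}_n$ avoiding all $(P_j,e_j)$. A tree pattern $(P,e)$, $P\in\mathcal{T}_k$, is friendly if: (i) $p(k)\neq\varepsilon$ and $c_L(k)\neq\varepsilon$ (the largest vertex $k$ is neither the root nor a leaf); (ii) $e(j)=0$ for every $j\in B_R^-(r(P))\setminus\{r(P)\}$; (iii) if $e(k)=1$ then $e(c_L(k))=0$. Rotations: for a vertex $j$ with $p(j)\ne\varepsilon$ and $j=c_R(p(j))$, set $i=p(j)$, $Y=L(j)$; the up-rotation of $j$ makes $j$ the child of $p(i)$ in place of $i$ (if $p(i)\ne\varepsilon$), makes $i$ the left child of $j$ and $Y$ the right subtree of $i$. The down-rotation of $j$ is its inverse and is defined iff $c_L(j)\ne\varepsilon$. An up-slide (down-slide) of $j$ by $d$ steps is a sequence of $d$ up-rotations (down-rotations) of $j$. For a set $\mathcal{L}_n\subseteq\mathcal{T}_n$, a slide producing a tree in $\mathcal{L}_n$ is minimal if every slide of the same vertex in the same direction by fewer steps produces a tree not in $\mathcal{L}_n$. Algorithm S (on $\mathcal{L}_n$, initial tree $T_0\in\mathcal{L}_n$): S1. Visit $T_0$. S2. Generate an unvisited tree from $\mathcal{L}_n$ by performing a minimal slide of the largest possible vertex in the most recently visited tree; if no such slide exists, or the direction of the slide is ambiguous, terminate; otherwise visit this tree and repeat S2. *)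

(* Defs.v *)
From Stdlib Require Import Arith List Relations.
Import ListNotations.

(* Unlabeled binary tree shapes; the labeling 1..n is the in-order labeling
   (this is the unique labeling satisfying the search tree property). *)
Inductive tree : Type := Leaf | Node (l r : tree).

Fixpoint tsize (t : tree) : nat :=
  match t with Leaf => 0 | Node l r => tsize l + tsize r + 1 end.

(* label of the root of subtree t whose vertices are labeled off+1..off+|t| *)
Definition rootlab (off : nat) (t : tree) : option nat :=
  match t with Leaf => None | Node l _ => Some (off + tsize l + 1) end.

(* (parent, child, child_is_left) triples *)
Fixpoint edges (off : nat) (t : tree) : list (nat * nat * bool) :=
  match t with
  | Leaf => []
  | Node l r =>
      let v := off + tsize l + 1 in
      (match rootlab off l with Some a => [(v, a, true)] | None => [] end) ++
      (match rootlab v r with Some b => [(v, b, false)] | None => [] end) ++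
      edges off l ++ edges v r
  end.

Definition edge (T : tree) (p c : nat) (isleft : bool) : Prop :=
  In (p, c, isleft) (edges 0 T).

Definition child (T : tree) (p c : nat) : Prop := exists b, edge T p c b.

Definition desc (T : tree) : nat -> nat -> Prop := clos_refl_trans nat (child T).

Definition is_root (T : tree) (r : nat) : Prop := rootlab 0 T = Some r.

(* tree pattern (P, e); e is only relevant on the non-root vertices of P *)
Record pattern := Pattern { pat : tree; pe : nat -> bool }.

Definition contains (T : tree) (p : pattern) : Prop :=
  let P := pat p in let k := tsize P in let n := tsize T in
  exists f : nat -> nat,
    (forall i, 1 <= i <= k -> 1 <= f i <= n) /\
    (forall i j, 1 <= i <= k -> 1 <= j <= k -> f i = f j -> i = j) /\
    (forall a c b, edge P a c b ->
       if pe p c then edge T (f a) (f c) b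
       else exists d, edge T (f a) d b /\ desc T d (f c)).

Definition avoids (T : tree) (p : pattern) : Prop := ~ contains T p.

Definition friendly (p : pattern) : Prop :=
  let P := pat p in let k := tsize P in
  (* (i) k is neither the root nor a leaf *)
  ((exists a, child P a k) /\ (exists c, edge P k c true)) /\
  (forall r j, is_root P r ->
     clos_refl_trans nat (fun a b => edge P a b false) r j ->
     j <> r -> (exists c, edge P j c false) -> pe p j = false) /\
  (forall c, pe p k = true -> edge P k c true -> pe p c = false).

Definition Ln (pats : list pattern) (n : nat) (T : tree) : Prop :=
  tsize T = n /\ forall p, In p pats -> avoids T p.

Fixpoint right_path (n : nat) : tree :=
  match n with 0 => Leaf | S m => Node Leaf (right_path m) end.

(* up-rotation of vertex j (j must be a right child) *)
Fixpoint rot_up_off (off j : nat) (t : tree) : option tree :=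
  match t with
  | Leaf => None
  | Node l r =>
      let v := off + tsize l + 1 in
      match r with
      | Node Y Z =>
          if Nat.eqb (v + tsize Y + 1) j then Some (Node (Node l Y) Z)
          else if Nat.ltb j v then
            match rot_up_off off j l with Some l' => Some (Node l' r) | None => None end
          else if Nat.ltb v j then
            match rot_up_off v j r with Some r' => Some (Node l r') | None => None end
          else None
      | Leaf =>
          if Nat.ltb j v then
            match rot_up_off off j l with Some l' => Some (Node l' r) | None => None end
          else None
      end
  end.

(* down-rotation of vertex j (defined iff j has a left child) *)
Fixpoint rot_down_off (off j : nat) (t : tree) : option tree :=
  match t with
  | Leaf => None
  | Node l r =>
      let v := off + tsize l + 1 in
      if Nat.eqb j v then
        match l with Node A Y => Some (Node A (Node Y r)) | Leaf => None end
      else if Nat.ltb j v then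
        match rot_down_off off j l with Some l' => Some (Node l' r) | None => None end
      else
        match rot_down_off v j r with Some r' => Some (Node l r') | None => None end
  end.

Definition rot_up (j : nat) (T : tree) : option tree := rot_up_off 0 j T.
Definition rot_down (j : nat) (T : tree) : option tree := rot_down_off 0 j T.

Fixpoint iter_opt (g : tree -> option tree) (d : nat) (T : tree) : option tree :=
  match d with
  | 0 => Some T
  | S d' => match g T with Some T' => iter_opt g d' T' | None => None end
  end.

Definition slide (up : bool) (j d : nat) (T : tree) : option tree :=
  iter_opt (if up then rot_up j else rot_down j) d T.

Definition min_slide (L : tree -> Prop) (T : tree) (j : nat) (up : bool) (T' : tree) : Prop :=
  exists d, 1 <= d /\ slide up j d T = Some T' /\ L T' /\
    forall d' T'', 1 <= d' < d -> slide up j d' T = Some T'' -> ~ L T''.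

Definition candidate (L : tree -> Prop) (vis : list tree) (cur : tree)
    (j : nat) (up : bool) (T' : tree) : Prop :=
  min_slide L cur j up T' /\ ~ In T' vis.

(* step S2: the tree T' generated from cur; no such T' means termination
   (no candidate, or ambiguous direction for the largest vertex) *)
Definition S_step (L : tree -> Prop) (cur : tree) (vis : list tree) (T' : tree) : Prop :=
  exists j up,
    candidate L vis cur j up T' /\
    (forall j' up' T'', candidate L vis cur j' up' T'' -> j' <= j) /\
    (forall up' T'', candidate L vis cur j up' T'' -> up' = up).

(* runs of Algorithm S; the list of visited trees is stored most recent first *)
Inductive S_run (L : tree -> Prop) (T0 : tree) : list tree -> Prop :=
  | run_init : S_run L T0 [T0]
  | run_step : forall T vis T',
      S_run L T0 (T :: vis) -> S_step L T (T :: vis) T' ->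
      S_run L T0 (T' :: T :: vis).

Definition S_complete (L : tree -> Prop) (T0 : tree) (vis : list tree) : Prop :=
  S_run L T0 vis /\
  exists T rest, vis = T :: rest /\ forall T', ~ S_step L T vis T'.

(* Main.v *)
Require Import Defs.
From Stdlib Require Import Arith List Relations Lia Sorting.Sorted Classical ClassicalEpsilon.
Import ListNotations.

Fixpoint ins (i : nat) (X : tree) {struct X} : tree :=
  match X with
  | Leaf => Node Leaf Leaf
  | Node l r => match i with 0 => Node X Leaf | S i' => Node l (ins i' r) end
  end.
Fixpoint rb (X : tree) : nat := match X with Leaf => 0 | Node _ r => S (rb r) end.
Fixpoint rem (T : tree) : tree :=
  match T with Leaf => Leaf | Node l Leaf => l | Node l r => Node l (rem r) end.
Fixpoint pos (T : tree) : nat :=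
  match T with Leaf => 0 | Node l Leaf => 0 | Node l r => S (pos r) end.
Fixpoint bot (t : tree) : tree :=
  match t with Leaf => Node Leaf Leaf | Node l r => Node l (bot r) end.

Lemma ins0 t : ins 0 t = Node t Leaf.
Proof. destruct t; reflexivity. Qed.

Lemma bot_ins t : bot t = ins (rb t) t.
Proof. induction t; simpl; auto. rewrite IHt2. reflexivity. Qed.

Lemma tree_eq_leaf t : {t = Leaf} + {t <> Leaf}.
Proof. destruct t; [left|right]; congruence. Qed.

Lemma rem_node l r : r <> Leaf -> rem (Node l r) = Node l (rem r).
Proof. destruct r; [congruence|reflexivity]. Qed.
Lemma pos_node l r : r <> Leaf -> pos (Node l r) = S (pos r).
Proof. destruct r; [congruence|reflexivity]. Qed.
Lemma ins_nl i X : ins i X <> Leaf.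
Proof. destruct X; destruct i; discriminate. Qed.

Lemma rem_ins i X : rem (ins i X) = X.
Proof.
  revert i; induction X; intros i; [reflexivity|].
  destruct i; [reflexivity|].
  change (rem (Node X1 (ins i X2)) = Node X1 X2).
  rewrite rem_node by apply ins_nl. rewrite IHX2. reflexivity.
Qed.

Lemma pos_ins i X : i <= rb X -> pos (ins i X) = i.
Proof.
  revert i; induction X; intros i Hi; simpl in Hi.
  - destruct i; [reflexivity|lia].
  - destruct i; [reflexivity|].
    change (pos (Node X1 (ins i X2)) = S i).
    rewrite pos_node by apply ins_nl. rewrite IHX2 by lia. reflexivity.
Qed.

Lemma ins_rem T : T <> Leaf -> ins (pos T) (rem T) = T /\ pos T <= rb (rem T).
Proof.
  induction T; intros H; [congruence|].
  destruct (tree_eq_leaf T2) as [E|E].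
  - subst. simpl. rewrite ins0. split; auto; lia.
  - destruct (IHT2 E) as [H1 H2].
    rewrite rem_node, pos_node by auto. simpl. rewrite H1. split; auto; lia.
Qed.

Lemma tsize_ins i X : tsize (ins i X) = S (tsize X).
Proof.
  revert i; induction X; intros i; simpl; auto.
  destruct i. { simpl. lia. }
  change (tsize X1 + tsize (ins i X2) + 1 = S (tsize X1 + tsize X2 + 1)). rewrite IHX2. lia.
Qed.

Lemma ins_inj i X j Y : i <= rb X -> j <= rb Y -> ins i X = ins j Y -> i = j /\ X = Y.
Proof.
  intros Hi Hj E.
  assert (X = Y) by (rewrite <- (rem_ins i X), <- (rem_ins j Y), E; auto).
  subst. split; auto. rewrite <- (pos_ins i Y), <- (pos_ins j Y), E; auto.
Qed.

Lemma bot_rp m : bot (right_path m) = right_path (S m).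
Proof. induction m; simpl; auto. rewrite IHm. auto. Qed.

Lemma rb_rp m : rb (right_path m) = m.
Proof. induction m; simpl; auto. Qed.

Ltac nat_cases :=
  repeat match goal with
  | |- context [Nat.eqb ?a ?b] => destruct (Nat.eqb_spec a b)
  | |- context [Nat.ltb ?a ?b] => destruct (Nat.ltb_spec a b)
  | H : context [Nat.eqb ?a ?b] |- _ => destruct (Nat.eqb_spec a b)
  | H : context [Nat.ltb ?a ?b] |- _ => destruct (Nat.ltb_spec a b)
  end.

Ltac opt_dest H :=
  match type of H with
  | match ?e with Some _ => _ | None => _ end = Some _ =>
      let E := fresh "E" in let u := fresh "u" in
      destruct e as [u|] eqn:E; [|discriminate]; inversion H; subst
  end.

Lemma rot_up_size off j t t' : rot_up_off off j t = Some t' -> tsize t' = tsize t.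
Proof.
  revert off t'; induction t; intros off t' H; simpl in H; [discriminate|].
  destruct t2 as [|Y Z]; nat_cases; simpl in H; try lia; try discriminate.
  all: try (inversion H; subst; simpl; lia).
  all: opt_dest H; simpl.
  all: first [rewrite (IHt1 _ _ E) | rewrite (IHt2 _ _ E)]; simpl; lia.
Qed.

Lemma rot_down_size off j t t' : rot_down_off off j t = Some t' -> tsize t' = tsize t.
Proof.
  revert off t'; induction t; intros off t' H; simpl in H; [discriminate|].
  nat_cases; simpl in H; try lia; try discriminate.
  all: try (destruct t1; inversion H; subst; simpl; lia).
  all: opt_dest H; simpl.
  all: first [rewrite (IHt1 _ _ E) | rewrite (IHt2 _ _ E)]; simpl; lia.
Qed.

Lemma rot_up_range off j t t' : rot_up_off off j t = Some t' -> off < j <= off + tsize t.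
Proof.
  revert off t'; induction t; intros off t' H; simpl in H; [discriminate|].
  destruct t2 as [|Y Z]; nat_cases; simpl in H; try lia; try discriminate.
  all: try (simpl; lia).
  all: opt_dest H.
  all: first [apply IHt1 in E | apply IHt2 in E]; simpl in *; lia.
Qed.

Lemma rot_down_range off j t t' : rot_down_off off j t = Some t' -> off < j <= off + tsize t.
Proof.
  revert off t'; induction t; intros off t' H; simpl in H; [discriminate|].
  nat_cases; simpl in H; try lia; try discriminate.
  all: try (simpl; lia).
  all: opt_dest H.
  all: first [apply IHt1 in E | apply IHt2 in E]; simpl in *; lia.
Qed.

Definition rot (up : bool) (j : nat) (T : tree) := if up then rot_up j T else rot_down j T.

Lemma slide_S up j d T : slide up j (S d) T =
  match rot up j T with Some T' => slide up j d T' | None => None end.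
Proof. destruct up; reflexivity. Qed.

Lemma slide_0 up j T : slide up j 0 T = Some T.
Proof. destruct up; reflexivity. Qed.

Lemma rot_size up j T T' : rot up j T = Some T' -> tsize T' = tsize T.
Proof. destruct up; [apply rot_up_size | apply rot_down_size]. Qed.

Lemma rot_range up j T T' : rot up j T = Some T' -> 0 < j <= tsize T.
Proof. destruct up; [apply rot_up_range | apply rot_down_range]. Qed.

Lemma slide_range up j d T T' : 1 <= d -> slide up j d T = Some T' -> 0 < j <= tsize T.
Proof.
  intros Hd H. destruct d; [lia|]. rewrite slide_S in H.
  destruct (rot up j T) eqn:E; [|discriminate]. eapply rot_range; eauto.
Qed.

Lemma slide_size up j d T T' : slide up j d T = Some T' -> tsize T' = tsize T.
Proof.
  revert T; induction d; intros T H.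
  - rewrite slide_0 in H. inversion H; auto.
  - rewrite slide_S in H. destruct (rot up j T) eqn:E; [|discriminate].
    rewrite (IHd _ H). eapply rot_size; eauto.
Qed.

Lemma slide_det_min L T j up T1 T2 : min_slide L T j up T1 -> min_slide L T j up T2 -> T1 = T2.
Proof.
  intros [d1 [H1 [S1 [L1 M1]]]] [d2 [H2 [S2 [L2 M2]]]].
  destruct (lt_eq_lt_dec d1 d2) as [[l|e]|l].
  - exfalso. apply (M2 d1 T1); auto.
  - subst. congruence.
  - exfalso. apply (M1 d2 T2); auto.
Qed.

Lemma rot_up_ins X off i : i < rb X ->
  rot_up_off off (off + tsize X + 1) (ins (S i) X) = Some (ins i X).
Proof.
  revert off i; induction X as [|l _ r IH]; intros off i Hi; simpl in Hi; [lia|].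
  destruct i as [|i'].
  - change (ins 1 (Node l r)) with (Node l (ins 0 r)). rewrite ins0.
    simpl. nat_cases; try lia. reflexivity.
  - destruct r as [|rl rr]; simpl in Hi; [lia|].
    change (ins (S (S i')) (Node l (Node rl rr))) with (Node l (ins (S i') (Node rl rr))).
    cbn [rot_up_off]. change (ins (S i') (Node rl rr)) with (Node rl (ins i' rr)).
    nat_cases; try (simpl in *; lia).
    replace (off + tsize (Node l (Node rl rr)) + 1) with ((off + tsize l + 1) + tsize (Node rl rr) + 1) by (simpl; lia).
    change (Node rl (ins i' rr)) with (ins (S i') (Node rl rr)).
    rewrite IH by (simpl; lia). reflexivity.
Qed.

Lemma rot_up_ins0 X off : rot_up_off off (off + tsize X + 1) (ins 0 X) = None.
Proof. rewrite ins0. simpl. nat_cases; auto; lia. Qed.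

Lemma rot_down_ins X off i : i < rb X ->
  rot_down_off off (off + tsize X + 1) (ins i X) = Some (ins (S i) X).
Proof.
  revert off i; induction X as [|l _ r IH]; intros off i Hi; simpl in Hi; [lia|].
  destruct i as [|i'].
  - rewrite ins0. cbn [rot_down_off]. nat_cases; try (simpl in *; lia).
    simpl. rewrite ins0. reflexivity.
  - change (ins (S i') (Node l r)) with (Node l (ins i' r)). cbn [rot_down_off].
    nat_cases; try (simpl in *; lia).
    replace (off + tsize (Node l r) + 1) with ((off + tsize l + 1) + tsize r + 1) by (simpl; lia).
    rewrite IH by lia. reflexivity.
Qed.

Lemma rot_down_insmax X off : rot_down_off off (off + tsize X + 1) (ins (rb X) X) = None.
Proof.
  revert off; induction X as [|l _ r IH]; intros off.
  - simpl. nat_cases; auto; lia.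
  - change (ins (rb (Node l r)) (Node l r)) with (Node l (ins (rb r) r)). cbn [rot_down_off].
    nat_cases; try (simpl in *; lia).
    replace (off + tsize (Node l r) + 1) with ((off + tsize l + 1) + tsize r + 1) by (simpl; lia).
    rewrite IH. reflexivity.
Qed.

Lemma slide_up_ins X d i : i <= rb X ->
  slide true (S (tsize X)) d (ins i X) = if d <=? i then Some (ins (i - d) X) else None.
Proof.
  revert i; induction d; intros i Hi.
  - simpl. rewrite Nat.sub_0_r. auto.
  - rewrite slide_S. simpl rot. unfold rot_up.
    replace (S (tsize X)) with (0 + tsize X + 1) by lia.
    destruct i as [|i'].
    + rewrite rot_up_ins0. reflexivity.
    + rewrite rot_up_ins by lia. replace (0 + tsize X + 1) with (S (tsize X)) by lia.
      rewrite IHd by lia. reflexivity.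
Qed.

Lemma slide_down_ins X d i : i <= rb X ->
  slide false (S (tsize X)) d (ins i X) = if i + d <=? rb X then Some (ins (i + d) X) else None.
Proof.
  revert i; induction d; intros i Hi.
  - simpl. rewrite Nat.add_0_r. destruct (Nat.leb_spec i (rb X)); auto; lia.
  - rewrite slide_S. simpl rot. unfold rot_down.
    replace (S (tsize X)) with (0 + tsize X + 1) by lia.
    destruct (Nat.eq_dec i (rb X)).
    + subst. rewrite rot_down_insmax. destruct (Nat.leb_spec (rb X + S d) (rb X)); auto; lia.
    + rewrite rot_down_ins by lia. replace (0 + tsize X + 1) with (S (tsize X)) by lia.
      rewrite IHd by lia. replace (S i + d) with (i + S d) by lia. reflexivity.
Qed.

Lemma rot_up_ext0 X off j : j < off + tsize X + 1 ->
  rot_up_off off j (Node X Leaf) = option_map (fun t => Node t Leaf) (rot_up_off off j X).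
Proof.
  intros H. simpl. nat_cases; try lia. destruct (rot_up_off off j X); reflexivity.
Qed.

Lemma rot_down_ext0 X off j : j < off + tsize X + 1 ->
  rot_down_off off j (Node X Leaf) = option_map (fun t => Node t Leaf) (rot_down_off off j X).
Proof.
  intros H. simpl. nat_cases; try lia. destruct (rot_down_off off j X); reflexivity.
Qed.

Lemma rot_up_node off j l r : rot_up_off off j (Node l r) =
      match r with
      | Node Y Z =>
          if Nat.eqb (off + tsize l + 1 + tsize Y + 1) j then Some (Node (Node l Y) Z)
          else if Nat.ltb j (off + tsize l + 1) then
            match rot_up_off off j l with Some l' => Some (Node l' r) | None => None end
          else if Nat.ltb (off + tsize l + 1) j then
            match rot_up_off (off + tsize l + 1) j r with Some r' => Some (Node l r') | None => None end
          else None
      | Leaf =>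
          if Nat.ltb j (off + tsize l + 1) then
            match rot_up_off off j l with Some l' => Some (Node l' r) | None => None end
          else None
      end.
Proof. reflexivity. Qed.

Lemma rot_down_node off j l r : rot_down_off off j (Node l r) =
      if Nat.eqb j (off + tsize l + 1) then
        match l with Node A Y => Some (Node A (Node Y r)) | Leaf => None end
      else if Nat.ltb j (off + tsize l + 1) then
        match rot_down_off off j l with Some l' => Some (Node l' r) | None => None end
      else
        match rot_down_off (off + tsize l + 1) j r with Some r' => Some (Node l r') | None => None end.
Proof. reflexivity. Qed.

Lemma rot_up_bot X off j : j < off + tsize X + 1 ->
  rot_up_off off j (bot X) = option_map bot (rot_up_off off j X).
Proof.
  revert off; induction X as [|l _ r IH]; intros off H.
  - simpl. nat_cases; auto.
  - change (bot (Node l r)) with (Node l (bot r)).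
    destruct r as [|Y Z].
    + simpl. nat_cases; simpl in *; try lia; try reflexivity.
      destruct (rot_up_off off j l); reflexivity.
    + change (bot (Node Y Z)) with (Node Y (bot Z)). rewrite !(rot_up_node off j l).
      nat_cases; simpl in H; try lia; try reflexivity.
      * destruct (rot_up_off off j l); reflexivity.
      * change (Node Y (bot Z)) with (bot (Node Y Z)). rewrite IH by (simpl; lia).
        destruct (rot_up_off (off + tsize l + 1) j (Node Y Z)); reflexivity.
Qed.

Lemma rot_down_bot X off j : j < off + tsize X + 1 ->
  rot_down_off off j (bot X) = option_map bot (rot_down_off off j X).
Proof.
  revert off; induction X as [|l _ r IH]; intros off H.
  - simpl. nat_cases; auto; lia.
  - change (bot (Node l r)) with (Node l (bot r)). rewrite !(rot_down_node off j l).
    nat_cases; simpl in H; try lia.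
    + destruct l; reflexivity.
    + destruct (rot_down_off off j l); reflexivity.
    + rewrite IH by lia. destruct (rot_down_off (off + tsize l + 1) j r); reflexivity.
Qed.

Definition commutes (ext : tree -> tree) :=
  forall up j X, j <= tsize X -> rot up j (ext X) = option_map ext (rot up j X).

Lemma commutes_ext0 : commutes (fun t => Node t Leaf).
Proof.
  intros up j X H. destruct up; simpl; unfold rot_up, rot_down;
  [apply rot_up_ext0 | apply rot_down_ext0]; lia.
Qed.

Lemma commutes_bot : commutes bot.
Proof.
  intros up j X H. destruct up; simpl; unfold rot_up, rot_down;
  [apply rot_up_bot | apply rot_down_bot]; lia.
Qed.

Lemma slide_commutes ext : commutes ext -> forall up j d X, j <= tsize X ->
  slide up j d (ext X) = option_map ext (slide up j d X).
Proof.
  intros C up j d. induction d; intros X H.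
  - rewrite !slide_0. reflexivity.
  - rewrite !slide_S. rewrite C by auto.
    destruct (rot up j X) eqn:E; simpl; auto.
    apply IHd. rewrite (rot_size _ _ _ _ E). auto.
Qed.

Definition bef (d : bool) (a b : nat) : Prop := if d then b < a else a < b.
Fixpoint downfrom (i : nat) : list nat := match i with 0 => [0] | S i' => i :: downfrom i' end.
Definition positions (d : bool) (r : nat) : list nat := if d then downfrom r else seq 0 (S r).

Lemma bef_irr d a : ~ bef d a a.
Proof. destruct d; simpl; lia. Qed.
Lemma bef_trans d a b c : bef d a b -> bef d b c -> bef d a c.
Proof. destruct d; simpl; lia. Qed.

Lemma downfrom_in r k : In k (downfrom r) <-> k <= r.
Proof.
  induction r; simpl; split; intros H.
  - destruct H; lia.
  - left; lia.
  - destruct H as [H|H]; [lia|apply IHr in H; lia].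
  - destruct (Nat.eq_dec k (S r)); [left; auto|right; apply IHr; lia].
Qed.

Lemma positions_in d r k : In k (positions d r) <-> k <= r.
Proof.
  destruct d; simpl. apply downfrom_in. rewrite in_seq. lia.
Qed.

Lemma Forall_in {A} (P : A -> Prop) l : Forall P l <-> forall x, In x l -> P x.
Proof. apply Forall_forall. Qed.

Lemma seq_ss c : forall a, StronglySorted (bef false) (seq a c).
Proof.
  induction c; intros a; simpl.
  - constructor.
  - constructor; [apply IHc|].
    apply Forall_forall. intros x Hx. apply in_seq in Hx. simpl. lia.
Qed.

Lemma positions_ss d r : StronglySorted (bef d) (positions d r).
Proof.
  destruct d; simpl.
  - induction r; simpl.
    + constructor; constructor.
    + constructor; auto. apply Forall_forall. intros x Hx. apply downfrom_in in Hx. simpl. lia.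
  - apply (seq_ss (S r) 0).
Qed.

Lemma ss_filter {A} (R : A -> A -> Prop) f l : StronglySorted R l -> StronglySorted R (filter f l).
Proof.
  induction 1; simpl; [constructor|].
  destruct (f a); auto. constructor; auto.
  rewrite Forall_forall in *. intros x Hx. apply filter_In in Hx. apply H0; tauto.
Qed.

Lemma ss_split {A} (R : A -> A -> Prop) l1 x l2 :
  StronglySorted R (l1 ++ x :: l2) ->
  (forall y, In y l1 -> R y x) /\ (forall y, In y l2 -> R x y).
Proof.
  induction l1; simpl; intros H.
  - apply StronglySorted_inv in H. destruct H as [_ H]. rewrite Forall_forall in H.
    split; auto. intros y [].
  - apply StronglySorted_inv in H. destruct H as [H1 H2]. destruct (IHl1 H1) as [H3 H4].
    split; auto. intros y [<-|Hy]; auto. rewrite Forall_forall in H2. apply H2.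
    apply in_or_app; simpl; auto.
Qed.

Lemma ss_nodup d l : StronglySorted (bef d) l -> NoDup l.
Proof.
  induction 1; constructor; auto. intros Hin. rewrite Forall_forall in H0.
  apply (bef_irr d a). auto.
Qed.

Definition IL (Lb : nat -> tree -> bool) n d X :=
  filter (fun i => Lb n (ins i X)) (positions d (rb X)).
Definition sweep Lb n d X := map (fun i => ins i X) (IL Lb n d X).
Fixpoint build Lb n d (l : list tree) : list tree :=
  match l with [] => [] | X :: l' => sweep Lb n d X ++ build Lb n (negb d) l' end.
Fixpoint Jn Lb m : list tree :=
  match m with 0 => [Leaf] | S m' => build Lb (S m') true (Jn Lb m') end.

Lemma IL_in Lb n d X i : In i (IL Lb n d X) <-> i <= rb X /\ Lb n (ins i X) = true.
Proof. unfold IL. rewrite filter_In, positions_in. tauto. Qed.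

Lemma IL_ss Lb n d X : StronglySorted (bef d) (IL Lb n d X).
Proof. apply ss_filter, positions_ss. Qed.

Lemma IL_split Lb n d X I1 i I2 : IL Lb n d X = I1 ++ i :: I2 ->
  (forall k, In k I1 <-> In k (IL Lb n d X) /\ bef d k i) /\
  (forall k, In k I2 <-> In k (IL Lb n d X) /\ bef d i k).
Proof.
  intros E. pose proof (IL_ss Lb n d X) as SS. rewrite E in SS.
  destruct (ss_split _ _ _ _ SS) as [H1 H2].
  split; intros k; rewrite E; split.
  - intros Hk; split; auto. apply in_or_app; auto.
  - intros [Hk B]. apply in_app_or in Hk. destruct Hk as [Hk|[<-|Hk]]; auto.
    + exfalso; eapply bef_irr; eauto.
    + exfalso. apply (bef_irr d i). eapply bef_trans; eauto.
  - intros Hk; split; auto. apply in_or_app; simpl; auto.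
  - intros [Hk B]. apply in_app_or in Hk. destruct Hk as [Hk|[<-|Hk]]; auto.
    + exfalso. apply (bef_irr d i). eapply bef_trans; eauto.
    + exfalso; eapply bef_irr; eauto.
Qed.

Lemma IL_next Lb n d X I1 i i' I3 : IL Lb n d X = I1 ++ i :: i' :: I3 ->
  bef d i i' /\ forall k, bef d i k -> bef d k i' -> ~ In k (IL Lb n d X).
Proof.
  intros E. pose proof (IL_ss Lb n d X) as SS. rewrite E in SS.
  destruct (ss_split _ _ _ _ SS) as [H1 H2].
  replace (I1 ++ i :: i' :: I3) with ((I1 ++ [i]) ++ i' :: I3) in SS by (rewrite <- app_assoc; auto).
  destruct (ss_split _ _ _ _ SS) as [H3 H4].
  split. { apply H2; simpl; auto. }
  intros k B1 B2 Hk. rewrite E in Hk. apply in_app_or in Hk. destruct Hk as [Hk|[<-|[<-|Hk]]].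
  - apply (bef_irr d i). eapply bef_trans; eauto.
  - eapply bef_irr; eauto.
  - eapply bef_irr; eauto.
  - apply (bef_irr d i'). eapply bef_trans; eauto.
Qed.

Lemma sweep_in Lb n d X Y : In Y (sweep Lb n d X) <->
  exists i, i <= rb X /\ Y = ins i X /\ Lb n Y = true.
Proof.
  unfold sweep. rewrite in_map_iff. split.
  - intros [i [<- Hi]]. apply IL_in in Hi. exists i; tauto.
  - intros [i [H1 [-> H3]]]. exists i; split; auto. apply IL_in; auto.
Qed.

Lemma build_in Lb n d l Y : In Y (build Lb n d l) <->
  exists X i, In X l /\ i <= rb X /\ Y = ins i X /\ Lb n Y = true.
Proof.
  revert d; induction l as [|X l IH]; intros d; simpl.
  - split; [intros []|]. intros [X [i [[] _]]].
  - rewrite in_app_iff, sweep_in, IH. split.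
    + intros [[i H]|[X' [i H]]]; [exists X, i|exists X', i]; tauto.
    + intros [X' [i [[<-|H1] H2]]]; [left; exists i; tauto|right; exists X', i; tauto].
Qed.

Lemma nodup_map_in {A B} (f : A -> B) l :
  (forall x y, In x l -> In y l -> f x = f y -> x = y) -> NoDup l -> NoDup (map f l).
Proof.
  intros Hf Hl. induction Hl; simpl; constructor.
  - intros Hin. apply in_map_iff in Hin. destruct Hin as [y [E Hy]].
    assert (y = x) by (apply Hf; simpl; auto). subst; auto.
  - apply IHHl. intros; apply Hf; simpl; auto.
Qed.

Lemma sweep_nodup Lb n d X : NoDup (sweep Lb n d X).
Proof.
  apply nodup_map_in.
  - intros x y Hx Hy E. apply IL_in in Hx. apply IL_in in Hy.
    apply (ins_inj x X y X); tauto.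
  - eapply ss_nodup, IL_ss.
Qed.

Lemma build_nodup Lb n d l : NoDup l -> NoDup (build Lb n d l).
Proof.
  intros H; revert d; induction H as [|X l Hn Hl IH]; intros d; simpl; [constructor|].
  apply NoDup_app; auto using sweep_nodup.
  intros Y H1 H2. apply sweep_in in H1. apply build_in in H2.
  destruct H1 as [i [Hi [-> _]]]. destruct H2 as [X' [k [HX' [Hk [E _]]]]].
  apply ins_inj in E; auto. destruct E as [_ <-]. auto.
Qed.

Lemma build_split Lb n d l A T B : build Lb n d l = A ++ T :: B ->
  exists P X Q d' S1 S2, l = P ++ X :: Q /\ sweep Lb n d' X = S1 ++ T :: S2 /\
    A = build Lb n d P ++ S1 /\ B = S2 ++ build Lb n (negb d') Q.
Proof.
  revert d A; induction l as [|X l IH]; intros d A E; simpl in E.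
  - destruct A; discriminate.
  - apply app_eq_app in E. destruct E as [w [[E1 E2]|[E1 E2]]].
    + destruct w as [|T' w'].
      * rewrite app_nil_r in E1. subst. simpl in E2.
        destruct (IH (negb d) [] (eq_sym E2)) as [P [X' [Q [d' [S1 [S2 [H1 [H2 [H3 H4]]]]]]]]].
        exists (X :: P), X', Q, d', S1, S2. simpl. rewrite H1. repeat split; auto.
        rewrite <- app_assoc, <- H3. rewrite app_nil_r. auto.
      * simpl in E2. inversion E2; subst.
        exists [], X, l, d, A, w'. simpl. repeat split; auto.
    + subst A.
      destruct (IH (negb d) w E2) as [P [X' [Q [d' [S1 [S2 [H1 [H2 [H3 H4]]]]]]]]].
      exists (X :: P), X', Q, d', S1, S2. simpl. rewrite H1. repeat split; auto.
      rewrite H3, app_assoc. auto.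
Qed.

Definition good (L : tree -> Prop) (J : list tree) (T0 : tree) : Prop :=
  NoDup J /\ (forall T, In T J <-> L T) /\ hd_error J = Some T0 /\
  forall A T B, J = A ++ T :: B -> forall T', S_step L T (T :: rev A) T' <-> hd_error B = Some T'.

Lemma good_run L J T0 : good L J T0 ->
  (exists vis, S_complete L T0 vis) /\
  (forall vis, S_complete L T0 vis -> NoDup vis /\ forall T, In T vis <-> L T).
Proof.
  intros [HN [HI [HH HS]]].
  assert (Hrun : forall A T B, J = A ++ T :: B -> S_run L T0 (T :: rev A)).
  { intros A. induction A as [|T1 A IHA] using rev_ind; intros T B E.
    - simpl in E. subst J. simpl in HH. inversion HH; subst. constructor.
    - rewrite rev_app_distr. simpl.
      assert (E' : J = A ++ T1 :: T :: B) by (rewrite E, <- app_assoc; auto).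
      apply run_step; [eapply IHA; eauto|].
      apply (HS A T1 (T :: B) E'). reflexivity. }
  assert (Hinv : forall vis, S_run L T0 vis -> exists A T B, J = A ++ T :: B /\ vis = T :: rev A).
  { induction 1 as [|T vis T' R IH St].
    - destruct J as [|T1 J']; [discriminate|]. simpl in HH. inversion HH; subst.
      exists [], T0, J'. auto.
    - destruct IH as [A [T1 [B [E1 E2]]]]. injection E2 as <- ->.
      apply (HS A T B E1) in St. destruct B as [|T2 B']; [discriminate|]. simpl in St. injection St as ->.
      exists (A ++ [T]), T', B'. split.
      + rewrite E1, <- app_assoc. auto.
      + rewrite rev_app_distr. auto. }
  split.
  - assert (NE : J <> []) by (intro E; rewrite E in HH; discriminate).
    destruct (exists_last NE) as [A [T HA]].
    exists (T :: rev A). split.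
    + apply (Hrun A T []); auto.
    + exists T, (rev A). split; auto. intros T' St.
      apply (HS A T [] HA) in St. discriminate.
  - intros vis [R [T [rest [E NS]]]]. destruct (Hinv vis R) as [A [T1 [B [E1 E2]]]].
    rewrite E in E2. injection E2 as -> ->. subst vis.
    destruct B as [|T2 B'].
    + assert (Hv : T1 :: rev A = rev J) by (rewrite E1, rev_app_distr; auto).
      rewrite Hv. split; [apply NoDup_rev; auto|]. intros X. rewrite <- in_rev. auto.
    + exfalso. apply (NS T2). apply (HS A T1 (T2 :: B') E1). reflexivity.
Qed.

Lemma step_mid L T vis N d T2 :
  candidate L vis T N d T2 ->
  (forall j up T'', candidate L vis T j up T'' -> j <= N) ->
  (forall up T'', candidate L vis T N up T'' -> up = d) ->
  forall T', S_step L T vis T' <-> T' = T2.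
Proof.
  intros C1 C2 C3 T'. split.
  - intros [j [up [Cj [Mj Uj]]]].
    assert (j = N) by (apply Nat.le_antisymm; [eapply C2; eauto| eapply Mj; eauto]). subst.
    assert (up = d) by (eapply C3; eauto). subst.
    destruct Cj as [Cj _]; destruct C1 as [C1 _]. eapply slide_det_min; eauto.
  - intros ->. exists N, d. split; auto.
Qed.

Lemma min_slide_transfer (L L' : tree -> Prop) ext X j up :
  commutes ext -> (forall Y, L (ext Y) <-> L' Y) -> j <= tsize X ->
  forall T'', min_slide L (ext X) j up T'' <-> exists Y, T'' = ext Y /\ min_slide L' X j up Y.
Proof.
  intros C HL Hj T''. split.
  - intros [d [Hd [Sd [LT M]]]]. rewrite (slide_commutes ext C up j d X Hj) in Sd.
    destruct (slide up j d X) as [Y|] eqn:E; inversion Sd; subst.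
    exists Y; split; auto. exists d; repeat split; auto.
    + apply HL; auto.
    + intros d' Y' Hd' Sd' LY'. apply (M d' (ext Y') Hd').
      * rewrite (slide_commutes ext C up j d' X Hj), Sd'. reflexivity.
      * apply HL; auto.
  - intros [Y [-> [d [Hd [Sd [LY M]]]]]]. exists d; repeat split; auto.
    + rewrite (slide_commutes ext C up j d X Hj), Sd. reflexivity.
    + apply HL; auto.
    + intros d' T3 Hd' Sd' LT3. rewrite (slide_commutes ext C up j d' X Hj) in Sd'.
      destruct (slide up j d' X) as [Y'|] eqn:E; inversion Sd'; subst.
      apply (M d' Y' Hd' E). apply HL; auto.
Qed.

Lemma step_trans (L L' : tree -> Prop) ext X vis vis' N :
  commutes ext -> (forall Y, L (ext Y) <-> L' Y) ->
  (forall Y, In (ext Y) vis <-> In Y vis') ->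
  (forall Y Y', ext Y = ext Y' -> Y = Y') ->
  tsize (ext X) = N -> N = S (tsize X) ->
  (forall up T'', ~ candidate L vis (ext X) N up T'') ->
  forall T', S_step L (ext X) vis T' <-> exists Y, T' = ext Y /\ S_step L' X vis' Y.
Proof.
  intros C HL HV Hinj HsN HN NoN.
  assert (CT : forall j up T'', j < N -> candidate L vis (ext X) j up T'' <->
            exists Y, T'' = ext Y /\ candidate L' vis' X j up Y).
  { intros j up T'' Hj. unfold candidate.
    rewrite (min_slide_transfer L L' ext X j up C HL ltac:(lia)). split.
    - intros [[Y [-> M]] NI]. exists Y. split; auto. split; auto. rewrite <- HV; auto.
    - intros [Y [-> [M NI]]]. split; [exists Y; auto|]. rewrite HV; auto. }
  assert (Clt : forall j up T'', candidate L vis (ext X) j up T'' -> j < N).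
  { intros j up T'' Cj. destruct (Nat.eq_dec j N) as [->|ne].
    - exfalso; eapply NoN; eauto.
    - destruct Cj as [[d [Hd [Sd _]]] _]. apply slide_range in Sd; auto. lia. }
  intros T'. split.
  - intros [j [up [Cj [Mj Uj]]]]. pose proof (Clt _ _ _ Cj) as Hj.
    apply CT in Cj; auto. destruct Cj as [Y [-> Cj]]. exists Y. split; auto.
    exists j, up. split; auto. split.
    + intros j' up' Y'' C'. assert (j' < N).
      { destruct C' as [[d [Hd [Sd _]]] _]. apply slide_range in Sd; auto. lia. }
      eapply Mj. apply CT; eauto.
    + intros up' Y'' C'. eapply Uj. apply CT; eauto.
  - intros [Y [-> [j [up [Cj [Mj Uj]]]]]].
    assert (Hj : j < N).
    { destruct Cj as [[d [Hd [Sd _]]] _]. apply slide_range in Sd; auto. lia. }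
    exists j, up. split; [apply CT; eauto|]. split.
    + intros j' up' T'' C'. pose proof (Clt _ _ _ C') as Hj'.
      apply CT in C'; auto. destruct C' as [Y' [-> C']]. eapply Mj; eauto.
    + intros up' T'' C'. apply CT in C'; auto. destruct C' as [Y' [-> C']]. eapply Uj; eauto.
Qed.

Record zig (L : nat -> tree -> Prop) (Lb : nat -> tree -> bool) : Prop := {
  zLb : forall n T, Lb n T = true <-> L n T;
  zsize : forall n T, L n T -> tsize T = n;
  z1 : forall m T, L (S m) T -> L m (rem T);
  z2 : forall m X, L m X -> L (S m) (ins 0 X);
  z3 : forall m X, L m X -> L (S m) (ins (rb X) X);
  z0 : L 0 Leaf }.

Definition extpos (d : bool) (Z : tree) := if d then 0 else rb Z.
Definition ext (d : bool) (Z : tree) := ins (extpos d Z) Z.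

Lemma extpos_le d Z : extpos d Z <= rb Z.
Proof. destruct d; simpl; lia. Qed.

Lemma commutes_ext d : commutes (ext d).
Proof.
  intros up j X H. unfold ext, extpos. destruct d.
  - rewrite ins0, commutes_ext0 by auto. destruct (rot up j X); simpl; rewrite ?ins0; auto.
  - rewrite <- bot_ins, commutes_bot by auto. destruct (rot up j X); simpl; rewrite ?bot_ins; auto.
Qed.

Lemma ext_inj d Y Y' : ext d Y = ext d Y' -> Y = Y'.
Proof. unfold ext. intros E. apply ins_inj in E; auto using extpos_le. tauto. Qed.

Lemma L_ext L Lb (Z : zig L Lb) m d Y : L (S m) (ext d Y) <-> L m Y.
Proof.
  split; intros H.
  - apply (z1 _ _ Z) in H. unfold ext in H. rewrite rem_ins in H. auto.
  - unfold ext, extpos. destruct d; [apply (z2 _ _ Z)|apply (z3 _ _ Z)]; auto.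
Qed.

Lemma IL_head Lb n d X : Lb n (ext (negb d) X) = true ->
  exists rest, IL Lb n d X = extpos (negb d) X :: rest.
Proof.
  unfold IL, ext, positions, extpos. intros H. destruct d; simpl in *.
  - destruct (rb X) as [|r] eqn:E; simpl; rewrite ?E in H; rewrite H; eauto.
  - rewrite H; eauto.
Qed.

Lemma slide_ins_gen X n up dd i T'' : n = S (tsize X) -> i <= rb X ->
  slide up n dd (ins i X) = Some T'' ->
  exists k, k <= rb X /\ T'' = ins k X /\ (if up then k + dd = i else k = i + dd).
Proof.
  intros -> Hi H. destruct up.
  - rewrite slide_up_ins in H by auto. destruct (Nat.leb_spec dd i); inversion H; subst.
    exists (i - dd). repeat split; auto; lia.
  - rewrite slide_down_ins in H by auto. destruct (Nat.leb_spec (i + dd) (rb X)); inversion H; subst.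
    exists (i + dd). repeat split; auto.
Qed.

Lemma zig_base L Lb (Z : zig L Lb) : good (L 0) [Leaf] (right_path 0).
Proof.
  split; [constructor; [intros []|constructor]|].
  split; [|split; [reflexivity|]].
  - intros T. split; [intros [<-|[]]; apply (z0 _ _ Z)|].
    intros H. apply (zsize _ _ Z) in H. destruct T; [left; auto|simpl in H; lia].
  - intros A T B E T'. destruct A as [|a A]; [|destruct A; discriminate].
    simpl in E. inversion E; subst. simpl. split; [|discriminate].
    intros [j [up [[[d [Hd [Sd _]]] _] _]]]. apply slide_range in Sd; auto. simpl in Sd. lia.
Qed.

Lemma zig_step L Lb (Z : zig L Lb) m J' : good (L m) J' (right_path m) ->
  good (L (S m)) (build Lb (S m) true J') (right_path (S m)).
Proof.
  intros [GN [GI [GH GS]]].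
  assert (LX : forall X, In X J' -> L m X /\ tsize X = m).
  { intros X H. apply GI in H. split; auto. eapply zsize; eauto. }
  assert (HLb := zLb _ _ Z).
  split; [apply build_nodup; auto|].
  split.
  { intros T. rewrite build_in. split.
    - intros [X [i [_ [_ [_ H]]]]]. apply HLb; auto.
    - intros H. assert (NL : T <> Leaf).
      { intros ->. apply (zsize _ _ Z) in H. simpl in H. lia. }
      destruct (ins_rem T NL) as [E1 E2]. exists (rem T), (pos T).
      split; [apply GI; eapply z1; eauto|]. split; auto. split; auto. apply HLb; auto. }
  split.
  { destruct J' as [|X0 J'']; [discriminate|]. simpl in GH. inversion GH; subst X0.
    simpl. unfold sweep.
    destruct (IL_head Lb (S m) true (right_path m)) as [rest Hr].
    { apply HLb. apply (L_ext L Lb Z). apply GI. simpl; auto. }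
    rewrite Hr. simpl. unfold extpos. rewrite <- bot_ins, bot_rp. reflexivity. }
  intros A T B E T'.
  destruct (build_split _ _ _ _ _ _ _ E) as [P [X [Q [d' [S1 [S2 [HJ [HS [HA HB]]]]]]]]].
  unfold sweep in HS. apply map_eq_app in HS. destruct HS as [I1 [Ir [HIL [HS1 HS2]]]].
  apply map_eq_cons in HS2. destruct HS2 as [i [I2 [-> [HT HS2]]]]. subst S1 S2 T A B.
  assert (XJ : In X J') by (rewrite HJ; apply in_or_app; simpl; auto).
  destruct (LX X XJ) as [LXm SX].
  assert (XP : ~ In X P).
  { intros H. rewrite HJ in GN. apply NoDup_remove_2 in GN. apply GN, in_or_app; auto. }
  assert (Hi : i <= rb X /\ Lb (S m) (ins i X) = true).
  { apply (IL_in Lb (S m) d' X i). rewrite HIL. apply in_or_app; simpl; auto. }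
  destruct (IL_split _ _ _ _ _ _ _ HIL) as [Sp1 Sp2].
  set (vis := ins i X :: rev (build Lb (S m) true P ++ map (fun i0 => ins i0 X) I1)).
  assert (Vin : forall Y, In Y vis <-> Y = ins i X \/ In Y (build Lb (S m) true P) \/
                                   In Y (map (fun i0 => ins i0 X) I1)).
  { intros Y. unfold vis. simpl. rewrite <- in_rev, in_app_iff. intuition. }
  assert (Vbef : forall k, In k (IL Lb (S m) d' X) -> bef d' k i -> In (ins k X) vis).
  { intros k Hk B. apply Vin. right; right. apply (in_map (fun i0 => ins i0 X)). apply Sp1; auto. }
  assert (SlideX : forall up dd T'', slide up (S m) dd (ins i X) = Some T'' ->
       exists k, k <= rb X /\ T'' = ins k X /\ (if up then k + dd = i else k = i + dd)).
  { intros up dd T'' H. apply (slide_ins_gen X (S m) up dd i T''); auto; try lia; tauto. }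
  destruct I2 as [|i' I3].
  -
    simpl.
    assert (Hie : i = extpos d' X).
    { assert (He : In (extpos d' X) (IL Lb (S m) d' X)).
      { apply (IL_in Lb (S m) d' X). split; [apply extpos_le|]. apply HLb. apply (L_ext L Lb Z); auto. }
      rewrite HIL in He. apply in_app_or in He. destruct He as [He|[He|[]]]; auto.
      apply Sp1 in He. destruct He as [_ Bf]. destruct d'; simpl in Bf; lia. }
    change (ins i X) with (ins i X) in *.
    assert (HT : ins i X = ext d' X) by (unfold ext; rewrite Hie; auto).
    fold vis. rewrite HT.
    rewrite (step_trans (L (S m)) (L m) (ext d') X vis (X :: rev P) (S m)).
    + split.
      * intros [Y [-> St]]. apply (GS P X Q HJ) in St.
        destruct Q as [|Y0 Q']; [discriminate|]. simpl in St. inversion St; subst Y0.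
        assert (YJ : In Y J') by (rewrite HJ; apply in_or_app; simpl; auto).
        destruct (IL_head Lb (S m) (negb d') Y) as [rest Hr].
        { rewrite Bool.negb_involutive. apply HLb, (L_ext L Lb Z). apply LX; auto. }
        simpl. unfold sweep. rewrite Hr. simpl. rewrite Bool.negb_involutive. reflexivity.
      * intros H. destruct Q as [|Y Q']; [simpl in H; discriminate|].
        assert (YJ : In Y J') by (rewrite HJ; apply in_or_app; simpl; auto).
        destruct (IL_head Lb (S m) (negb d') Y) as [rest Hr].
        { rewrite Bool.negb_involutive. apply HLb, (L_ext L Lb Z). apply LX; auto. }
        simpl in H. unfold sweep in H. rewrite Hr in H. simpl in H. inversion H; subst T'.
        rewrite Bool.negb_involutive. exists Y. split; auto.
        apply (GS P X (Y :: Q') HJ). reflexivity.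
    + apply commutes_ext.
    + intros Y. apply (L_ext L Lb Z).
    + intros Y. rewrite Vin. simpl. rewrite <- in_rev. split.
      * intros [H|[H|H]].
        -- left. rewrite HT in H. apply ext_inj in H. auto.
        -- right. apply build_in in H. destruct H as [X0 [k [H1 [H2 [H3 _]]]]].
           unfold ext in H3. apply ins_inj in H3; auto using extpos_le. destruct H3 as [_ ->]. auto.
        -- left. apply in_map_iff in H. destruct H as [k [H1 H2]].
           unfold ext in H1. apply ins_inj in H1; auto using extpos_le.
           ++ destruct H1 as [_ ->]. auto.
           ++ assert (In k (IL Lb (S m) d' X)) by (apply Sp1; auto). apply (IL_in Lb (S m) d' X k) in H. tauto.
      * intros [<-|H]; [left; auto|].
        right. left. apply build_in. exists Y, (extpos d' Y). split; auto. split; [apply extpos_le|].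
        split; auto. apply HLb, (L_ext L Lb Z). apply LX. rewrite HJ. apply in_or_app; auto.
    + apply ext_inj.
    + unfold ext. rewrite tsize_ins, SX. auto.
    + lia.
    + intros up T'' [[dd [Hdd [Sd [LT _]]]] NI]. rewrite <- HT in Sd.
      destruct (SlideX _ _ _ Sd) as [k [Hk [-> _]]]. apply NI.
      assert (Kin : In k (IL Lb (S m) d' X)) by (apply (IL_in Lb (S m) d' X k); split; auto; apply HLb; auto).
      rewrite HIL in Kin. apply in_app_or in Kin. destruct Kin as [Kin|[<-|[]]].
      * apply Vin. right; right. apply (in_map (fun i0 => ins i0 X)); auto.
      * apply Vin. auto.
  -
    destruct (IL_next _ _ _ _ _ _ _ _ HIL) as [Bi' Nb].
    assert (Hi' : i' <= rb X /\ Lb (S m) (ins i' X) = true).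
    { apply (IL_in Lb (S m) d' X i'). rewrite HIL. apply in_or_app; simpl; auto. }
    fold vis. simpl.
    rewrite (step_mid (L (S m)) (ins i X) vis (S m) d' (ins i' X)).
    + split; [intros ->; auto|intros H; inversion H; auto].
    + split.
      * exists (if d' then i - i' else i' - i). split; [destruct d'; simpl in Bi'; lia|].
        split; [|split; [apply HLb; tauto|]].
        -- destruct d'; simpl in Bi'.
           ++ replace (S m) with (S (tsize X)) by lia. rewrite slide_up_ins by tauto.
              destruct (Nat.leb_spec (i - i') i); [|lia]. f_equal. f_equal. lia.
           ++ replace (S m) with (S (tsize X)) by lia. rewrite slide_down_ins by tauto.
              destruct (Nat.leb_spec (i + (i' - i)) (rb X)); [|lia]. f_equal. f_equal. lia.
        -- intros d'' T3 Hd'' Sd LT3. destruct (SlideX _ _ _ Sd) as [k [Hk [-> Hkk]]].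
           apply (Nb k).
           ++ destruct d'; simpl in *; lia.
           ++ destruct d'; simpl in *; lia.
           ++ apply (IL_in Lb (S m) d' X k). split; auto. apply HLb; auto.
      * rewrite Vin. intros [H|[H|H]].
        -- apply ins_inj in H; try tauto. destruct H as [H _]. subst. eapply bef_irr; eauto.
        -- apply build_in in H. destruct H as [X0 [k [H1 [H2 [H3 _]]]]].
           apply ins_inj in H3; try tauto. destruct H3 as [_ ->]. auto.
        -- apply in_map_iff in H. destruct H as [k [H1 H2]]. apply Sp1 in H2.
           destruct H2 as [H2 Bk]. apply (IL_in Lb (S m) d' X k) in H2.
           apply ins_inj in H1; try tauto. destruct H1 as [-> _].
           apply (bef_irr d' i). eapply bef_trans; eauto.
    + intros j up T'' [[dd [Hdd [Sd _]]] _]. apply slide_range in Sd; auto.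
      rewrite tsize_ins in Sd. lia.
    + intros up T'' [[dd [Hdd [Sd [LT _]]]] NI].
      destruct (SlideX _ _ _ Sd) as [k [Hk [-> Hkk]]].
      destruct (Bool.bool_dec up d') as [|ne]; auto. exfalso. apply NI.
      apply Vbef.
      * apply (IL_in Lb (S m) d' X k). split; auto. apply HLb; auto.
      * destruct up, d'; simpl in *; try congruence; lia.
Qed.

Theorem zig_good L Lb (Z : zig L Lb) m : good (L m) (Jn Lb m) (right_path m).
Proof.
  induction m; simpl; [apply (zig_base L Lb Z)|]. apply zig_step; auto.
Qed.

Definition crel (E : list (nat * nat * bool)) (a c : nat) : Prop := exists b, In (a, c, b) E.
Definition rrel (E : list (nat * nat * bool)) (a c : nat) : Prop := In (a, c, false) E.
Notation rt := (clos_refl_trans nat).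

Lemma edges_node_in off l r e :
  In e (edges off (Node l r)) <->
  (exists a, rootlab off l = Some a /\ e = (off + tsize l + 1, a, true)) \/
  (exists b, rootlab (off + tsize l + 1) r = Some b /\ e = (off + tsize l + 1, b, false)) \/
  In e (edges off l) \/ In e (edges (off + tsize l + 1) r).
Proof.
  cbn [edges]. rewrite !in_app_iff.
  destruct (rootlab off l) as [a|]; destruct (rootlab (off + tsize l + 1) r) as [b|]; simpl;
  split; intros H; repeat destruct H as [H|H]; subst;
  repeat match goal with
         | H : exists _, _ |- _ => destruct H as [? [? ?]]
         end; try congruence; subst; eauto 10.
  all: try (inversion H; subst; eauto 10).
Qed.

Lemma rootlab_range off t c : rootlab off t = Some c -> off < c <= off + tsize t.
Proof. destruct t; simpl; intros H; inversion H; lia. Qed.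

Lemma rootlab_node off l r : rootlab off (Node l r) = Some (off + tsize l + 1).
Proof. reflexivity. Qed.

Ltac ein H :=
  rewrite edges_node_in in H;
  let a := fresh "a" in let Ha := fresh "Ha" in let He := fresh "He" in
  destruct H as [[a [Ha He]]|[[a [Ha He]]|[H|H]]]; [inversion He; subst; clear He|inversion He; subst; clear He| |].

Lemma edge_range off t p c b : In (p, c, b) (edges off t) ->
  off < p <= off + tsize t /\ off < c <= off + tsize t /\ (if b then c < p else p < c).
Proof.
  revert off; induction t as [|l IHl r IHr]; intros off H; [destruct H|].
  ein H; simpl.
  - apply rootlab_range in Ha. lia.
  - apply rootlab_range in Ha. lia.
  - apply IHl in H. destruct b; lia.
  - apply IHr in H. destruct b; lia.
Qed.

Lemma rt_mono (E E' : list (nat * nat * bool)) u x :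
  (forall e, In e E -> In e E') -> rt (crel E) u x -> rt (crel E') u x.
Proof.
  intros S H. induction H; eauto using rt_refl, rt_trans.
  apply rt_step. destruct H as [b H]. exists b; auto.
Qed.

Lemma rrt_mono (E E' : list (nat * nat * bool)) u x :
  (forall e, In e E -> In e E') -> rt (rrel E) u x -> rt (rrel E') u x.
Proof.
  intros S H. induction H; eauto using rt_refl, rt_trans.
  apply rt_step. unfold rrel in *; auto.
Qed.

Lemma rt_restrict (E E' : list (nat * nat * bool)) lo hi u x :
  (forall p c b, In (p, c, b) E -> lo < p <= hi -> In (p, c, b) E') ->
  (forall p c b, In (p, c, b) E' -> lo < c <= hi) ->
  lo < u <= hi -> rt (crel E) u x -> rt (crel E') u x /\ lo < x <= hi.
Proof.
  intros H1 H2 Hu H. apply clos_rt_rt1n_iff in H. induction H.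
  - split; auto. apply rt_refl.
  - destruct H as [b H]. assert (Hy : In (x, y, b) E') by auto.
    destruct (IHclos_refl_trans_1n ltac:(eapply H2; eauto)) as [R1 R2].
    split; auto. eapply rt_trans; [apply rt_step; exists b; eauto|auto].
Qed.

Lemma sub_l off l r : forall e, In e (edges off l) -> In e (edges off (Node l r)).
Proof. intros e H. apply edges_node_in. auto. Qed.
Lemma sub_r off l r : forall e, In e (edges (off + tsize l + 1) r) -> In e (edges off (Node l r)).
Proof. intros e H. apply edges_node_in. auto. Qed.

Lemma restrict_l off l r u x : off < u <= off + tsize l ->
  rt (crel (edges off (Node l r))) u x -> rt (crel (edges off l)) u x /\ off < x <= off + tsize l.
Proof.
  intros Hu H. apply (rt_restrict (edges off (Node l r)) (edges off l) off (off + tsize l) u x); [| |exact Hu|exact H].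
  - intros p c b He Hp. ein He; [lia|lia|auto|apply edge_range in He; lia].
  - intros p c b He. apply edge_range in He. lia.
Qed.

Lemma restrict_r off l r u x : off + tsize l + 1 < u <= off + tsize (Node l r) ->
  rt (crel (edges off (Node l r))) u x ->
  rt (crel (edges (off + tsize l + 1) r)) u x /\ off + tsize l + 1 < x <= off + tsize (Node l r).
Proof.
  intros Hu H. apply (rt_restrict (edges off (Node l r)) (edges (off + tsize l + 1) r) (off + tsize l + 1) (off + tsize (Node l r)) u x); [| |exact Hu|exact H].
  - intros p c b He Hp. ein He; [simpl in *; lia|simpl in *; lia|apply edge_range in He; simpl in *; lia|auto].
  - intros p c b He. apply edge_range in He. simpl. lia.
Qed.

Lemma edge_ord off t p c b x : In (p, c, b) (edges off t) ->
  rt (crel (edges off t)) c x -> if b then x < p else p < x.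
Proof.
  revert off p c b; induction t as [|l IHl r IHr]; intros off p c b H Hx; [destruct H|].
  pose proof (edge_range _ _ _ _ _ H) as Rg.
  ein H.
  - apply rootlab_range in Ha. apply restrict_l in Hx; [lia|lia].
  - apply rootlab_range in Ha. apply restrict_r in Hx; [lia|simpl; lia].
  - pose proof (edge_range _ _ _ _ _ H) as R2. apply restrict_l in Hx; [|lia].
    eapply IHl; eauto. tauto.
  - pose proof (edge_range _ _ _ _ _ H) as R2. apply restrict_r in Hx; [|simpl; lia].
    eapply IHr; eauto. tauto.
Qed.

Lemma all_desc off t c x : rootlab off t = Some c -> off < x <= off + tsize t ->
  rt (crel (edges off t)) c x.
Proof.
  revert off c; induction t as [|l IHl r IHr]; intros off c Hc Hx; [discriminate|].
  simpl in Hc. inversion Hc; subst c. simpl in Hx.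
  destruct (lt_eq_lt_dec x (off + tsize l + 1)) as [[lt|eq]|gt].
  - destruct l as [|ll lr]; [simpl in *; lia|].
    eapply rt_trans.
    + apply rt_step. exists true. apply edges_node_in. left. eexists; split; [reflexivity|eauto].
    + eapply rt_mono; [apply sub_l|]. apply IHl; [reflexivity|lia].
  - subst. apply rt_refl.
  - destruct r as [|rl rr]; [simpl in *; lia|].
    eapply rt_trans.
    + apply rt_step. exists false. apply edges_node_in. right; left. eexists; split; [reflexivity|eauto].
    + eapply rt_mono; [apply sub_r|]. apply IHr; [reflexivity|lia].
Qed.

Lemma root_not_child off t p c b r : In (p, c, b) (edges off t) -> rootlab off t = Some r -> c <> r.
Proof.
  destruct t as [|l r0]; intros H Hr; [destruct H|]. simpl in Hr. inversion Hr; subst r.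
  ein H.
  - apply rootlab_range in Ha. lia.
  - apply rootlab_range in Ha. lia.
  - apply edge_range in H. lia.
  - apply edge_range in H. lia.
Qed.

Lemma uniq_parent off t p c b p' b' : In (p, c, b) (edges off t) -> In (p', c, b') (edges off t) ->
  p = p' /\ b = b'.
Proof.
  revert off; induction t as [|l IHl r IHr]; intros off H H'; [destruct H|].
  pose proof (edge_range _ _ _ _ _ H) as R1. pose proof (edge_range _ _ _ _ _ H') as R2.
  ein H; ein H'; try (split; reflexivity);
  repeat match goal with
  | E : rootlab _ _ = Some _ |- _ => pose proof (rootlab_range _ _ _ E); revert E
  end; intros;
  try (match goal with
       | H : In _ (edges _ _) |- _ => pose proof (edge_range _ _ _ _ _ H)
       end);
  try (match goal with
       | H : In _ (edges _ _), H' : In _ (edges _ _) |- _ =>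
           pose proof (edge_range _ _ _ _ _ H); pose proof (edge_range _ _ _ _ _ H')
       end);
  try (destruct b; destruct b'; lia); try lia; eauto.
  - exfalso. eapply root_not_child; eauto.
  - exfalso. eapply root_not_child; eauto.
  - exfalso. eapply root_not_child; eauto.
  - exfalso. eapply root_not_child; eauto.
Qed.

Lemma uniq_child off t p c c' b : In (p, c, b) (edges off t) -> In (p, c', b) (edges off t) -> c = c'.
Proof.
  revert off; induction t as [|l IHl r IHr]; intros off H H'; [destruct H|].
  ein H; ein H'; try congruence;
  repeat match goal with
  | E : rootlab _ _ = Some _ |- _ => pose proof (rootlab_range _ _ _ E); revert E
  end; intros;
  repeat match goal with
  | H : In _ (edges _ _) |- _ => pose proof (edge_range _ _ _ _ _ H); revert H
  end; intros; try lia; eauto.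
Qed.

Lemma left_anc off t a : off < a < off + tsize t ->
  (forall y, ~ In (a, y, false) (edges off t)) ->
  exists z d, In (z, d, true) (edges off t) /\ rt (crel (edges off t)) d a.
Proof.
  revert off; induction t as [|l IHl r IHr]; intros off Ha Hn; [simpl in Ha; lia|].
  simpl in Ha.
  destruct (lt_eq_lt_dec a (off + tsize l + 1)) as [[lt|eq]|gt].
  - destruct (Nat.eq_dec a (off + tsize l)) as [e|ne].
    + destruct l as [|ll lr]; [simpl in *; lia|].
      exists (off + tsize (Node ll lr) + 1), (off + tsize ll + 1). split.
      * apply edges_node_in. left. eexists; split; reflexivity.
      * eapply rt_mono; [apply sub_l|]. apply all_desc; [reflexivity|lia].
    + destruct (IHl off) as [z [d [H1 H2]]]; [lia| |].
      * intros y Hy. apply (Hn y). apply sub_l; auto.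
      * exists z, d. split; [apply sub_l; auto|]. eapply rt_mono; [apply sub_l|]; auto.
  - subst. destruct r as [|rl rr]; [simpl in *; lia|].
    exfalso. apply (Hn (off + tsize l + 1 + tsize rl + 1)). apply edges_node_in.
    right; left. eexists; split; reflexivity.
  - destruct (IHr (off + tsize l + 1)) as [z [d [H1 H2]]]; [lia| |].
    * intros y Hy. apply (Hn y). apply sub_r; auto.
    * exists z, d. split; [apply sub_r; auto|]. eapply rt_mono; [apply sub_r|]; auto.
Qed.

Lemma right_branch off t x : off < x <= off + tsize t ->
  (forall z d, In (z, d, true) (edges off t) -> ~ rt (crel (edges off t)) d x) ->
  exists r, rootlab off t = Some r /\ rt (rrel (edges off t)) r x.
Proof.
  revert off; induction t as [|l IHl r IHr]; intros off Hx Hn; [simpl in Hx; lia|].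
  exists (off + tsize l + 1). split; [reflexivity|]. simpl in Hx.
  destruct (lt_eq_lt_dec x (off + tsize l + 1)) as [[lt|eq]|gt].
  - destruct l as [|ll lr]; [simpl in *; lia|]. exfalso.
    apply (Hn (off + tsize (Node ll lr) + 1) (off + tsize ll + 1)).
    + apply edges_node_in. left. eexists; split; reflexivity.
    + eapply rt_mono; [apply sub_l|]. apply all_desc; [reflexivity|lia].
  - subst. apply rt_refl.
  - destruct (IHr (off + tsize l + 1)) as [rr [H1 H2]]; [lia| |].
    + intros z d Hz Hd. apply (Hn z d); [apply sub_r; auto|]. eapply rt_mono; [apply sub_r|]; eauto.
    + eapply rt_trans.
      * apply rt_step. unfold rrel. apply edges_node_in. right; left. eexists; split; eauto.
      * eapply rrt_mono; [apply sub_r|]; eauto.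
Qed.

Ltac teq := apply pair_equal_spec; split; [apply pair_equal_spec; split|]; simpl in *; first [reflexivity|lia].

Lemma edges_ext0 off X e : In e (edges off (Node X Leaf)) <->
  In e (edges off X) \/ exists c, rootlab off X = Some c /\ e = (off + tsize X + 1, c, true).
Proof.
  rewrite edges_node_in. simpl. split.
  - intros [H|[[b [H _]]|[H|[]]]]; auto. discriminate.
  - intros [H|H]; auto.
Qed.

Lemma rootlab_bot o r : r <> Leaf -> rootlab o (bot r) = rootlab o r.
Proof. destruct r; [congruence|reflexivity]. Qed.

Lemma edges_bot off X e : In e (edges off (bot X)) <->
  In e (edges off X) \/ (X <> Leaf /\ e = (off + tsize X, off + tsize X + 1, false)).
Proof.
  revert off; induction X as [|l IHl r IHr]; intros off.
  - simpl. split; [intros []|]. intros [[]|[H _]]. congruence.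
  - change (bot (Node l r)) with (Node l (bot r)). rewrite !edges_node_in.
    assert (Es : tsize (bot r) = S (tsize r)) by (rewrite bot_ins, tsize_ins; auto).
    destruct (tree_eq_leaf r) as [->|NL].
    + simpl. split.
      * intros [H|[[b [Hb He]]|[H|[]]]]; auto.
        right. inversion Hb; subst. split; [discriminate|]. teq.
      * intros [[H|[[b [Hb _]]|[H|[]]]]|[_ He]]; auto; [discriminate|].
        right; left. eexists; split; [reflexivity|]. rewrite He. teq.
    + rewrite rootlab_bot by auto. rewrite IHr. split.
      * intros [H|[H|[H|[H|[_ He]]]]]; auto.
        right. split; [discriminate|]. rewrite He. simpl. teq.
      * intros [[H|[H|[H|H]]]|[_ He]]; auto.
        right; right; right; right. split; auto. rewrite He. simpl. teq.
Qed.

Lemma edges_ins off X i p c b : In (p, c, b) (edges off X) ->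
  In (p, c, b) (edges off (ins i X)) \/
  (b = false /\ In (p, off + tsize X + 1, false) (edges off (ins i X)) /\
   In (off + tsize X + 1, c, true) (edges off (ins i X)) /\
   rt (crel (edges off X)) c (off + tsize X)).
Proof.
  revert off i; induction X as [|l IHl r IHr]; intros off i H; [destruct H|].
  destruct i as [|i'].
  - left. change (ins 0 (Node l r)) with (Node (Node l r) Leaf). apply edges_ext0. auto.
  - change (ins (S i') (Node l r)) with (Node l (ins i' r)).
    rewrite edges_node_in in H. destruct H as [[a [Ha He]]|[[a [Ha He]]|[H|H]]].
    + left. apply edges_node_in. left. eauto.
    + inversion He; subst. clear He.
      destruct r as [|rl rr]; [discriminate|].
      destruct i' as [|i''].
      * right. split; auto. rewrite ins0.
        split; [|split].
        -- apply edges_node_in. right; left. eexists; split; [reflexivity|]. simpl; teq.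
        -- apply edges_node_in. right; right; right. apply edges_ext0. right.
           eexists; split; [eauto|]. simpl; teq.
        -- eapply rt_mono; [apply sub_r|]. apply all_desc; eauto. simpl. lia.
      * left. apply edges_node_in. right; left. eexists; split; [|reflexivity].
        simpl in *. inversion Ha; subst. reflexivity.
    + left. apply edges_node_in. auto.
    + destruct (IHr (off + tsize l + 1) i' H) as [H1|[H1 [H2 [H3 H4]]]].
      * left. apply edges_node_in. auto.
      * right. split; auto.
        replace (off + tsize (Node l r) + 1) with (off + tsize l + 1 + tsize r + 1) by (simpl; lia).
        replace (off + tsize (Node l r)) with (off + tsize l + 1 + tsize r) by (simpl; lia).
        split; [|split].
        -- apply edges_node_in. auto.
        -- apply edges_node_in. auto.
        -- eapply rt_mono; [apply sub_r|]; auto.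
Qed.

Definition emb (T : tree) (p : pattern) (f : nat -> nat) : Prop :=
  forall a c b, edge (pat p) a c b ->
    if pe p c then edge T (f a) (f c) b
    else exists d, edge T (f a) d b /\ desc T d (f c).

Lemma emb_edge T p f x y b : emb T p f -> edge (pat p) x y b ->
  exists d, edge T (f x) d b /\ desc T d (f y).
Proof.
  intros He H. specialize (He _ _ _ H). destruct (pe p y); eauto.
  exists (f y). split; auto. apply rt_refl.
Qed.

Lemma emb_desc T p f u w : emb T p f -> desc (pat p) u w -> desc T (f u) (f w).
Proof.
  intros He H. induction H.
  - destruct H as [b H]. destruct (emb_edge _ _ _ _ _ _ He H) as [d [H1 H2]].
    eapply rt_trans; [apply rt_step; exists b; eauto|auto].
  - apply rt_refl.
  - eapply rt_trans; eauto.
Qed.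

Lemma rt_last E d c : rt (crel E) d c -> d <> c -> exists w, rt (crel E) d w /\ crel E w c.
Proof.
  intros H ne. apply clos_rt_rtn1_iff in H. destruct H as [|y z Hy Hz]; [congruence|].
  exists y. split; auto. apply clos_rt_rtn1_iff; auto.
Qed.

Lemma desc_has_parent E z d a b : In (z, d, b) E -> rt (crel E) d a ->
  exists w b', In (w, a, b') E.
Proof.
  intros H1 H2. destruct (Nat.eq_dec d a) as [<-|ne]; eauto.
  destruct (rt_last _ _ _ H2 ne) as [w [_ [b' H]]]. eauto.
Qed.

Ltac unf_contains H :=
  unfold contains in H; cbv zeta in H; destruct H as [f [Hr [Hinj He]]].

Lemma contains_leaf p : friendly p -> ~ contains Leaf p.
Proof.
  intros [[_ [c Hc]] _] H. unf_contains H.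
  apply edge_range in Hc. specialize (Hr 1 ltac:(lia)). simpl in Hr. lia.
Qed.

Lemma pat_range p a c b : edge (pat p) a c b ->
  1 <= a <= tsize (pat p) /\ 1 <= c <= tsize (pat p).
Proof. intros H. apply edge_range in H. lia. Qed.

Lemma z2_pat p X : friendly p -> contains (Node X Leaf) p -> contains X p.
Proof.
  intros [[[a0 Hk] [c0 Hkc]] [Fii Fiii]] H. unf_contains H.
  set (N := tsize X + 1).
  assert (SN : tsize (Node X Leaf) = N) by (simpl; unfold N; lia).
  assert (TE : forall a c b, edge (Node X Leaf) a c b -> edge X a c b \/ (a = N /\ b = true /\ c <= tsize X)).
  { intros a c b E. unfold edge in E. apply edges_ext0 in E. destruct E as [E|[c1 [E1 E2]]]; auto.
    apply rootlab_range in E1. inversion E2; subst. right. unfold N. simpl. lia. }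
  assert (XR : forall a c b, edge X a c b -> a <= tsize X /\ c <= tsize X).
  { intros a c b E. apply edge_range in E. lia. }
  assert (NP : forall a b, ~ edge (Node X Leaf) a N b).
  { intros a b E. apply TE in E. destruct E as [E|E]; [apply XR in E|]; unfold N in *; lia. }
  assert (NR : forall c, ~ edge (Node X Leaf) N c false).
  { intros c E. apply TE in E. destruct E as [E|E]; [apply XR in E; unfold N in *; lia|]. intuition discriminate. }
  assert (DN : forall d, desc (Node X Leaf) d N -> d = N).
  { intros d D. destruct (Nat.eq_dec d N) as [|ne]; auto.
    destruct (rt_last _ _ _ D ne) as [w [_ [b E]]]. exfalso. eapply NP; eauto. }
  assert (DX : forall u x, u <> N -> desc (Node X Leaf) u x -> desc X u x).
  { intros u x ne D. apply clos_rt_rt1n_iff in D. induction D; [apply rt_refl|].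
    destruct H as [b E]. apply TE in E. destruct E as [E|E]; [|lia].
    eapply rt_trans; [apply rt_step; exists b; eauto|]. apply IHD.
    intros ->. apply XR in E. unfold N in E. lia. }
  assert (NI : forall a, 1 <= a <= tsize (pat p) -> f a <> N).
  { intros a Ha Hfa.
    assert (NoPar : forall x b, ~ edge (pat p) x a b).
    { intros x b E. specialize (He _ _ _ E). destruct (pe p a).
      - rewrite Hfa in He. eapply NP; eauto.
      - destruct He as [d [E1 E2]]. rewrite Hfa in E2. apply DN in E2. subst. eapply NP; eauto. }
    assert (NoR : forall y, ~ edge (pat p) a y false).
    { intros y E. specialize (He _ _ _ E). destruct (pe p y).
      - rewrite Hfa in He. eapply NR; eauto.
      - destruct He as [d [E1 _]]. rewrite Hfa in E1. eapply NR; eauto. }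
    destruct (Nat.eq_dec a (tsize (pat p))) as [ek|nk].
    - subst a. destruct Hk as [b Hk]. eapply NoPar; eauto.
    - destruct (left_anc 0 (pat p) a) as [z [d [E1 E2]]]; [lia|exact NoR|].
      destruct (desc_has_parent _ _ _ _ _ E1 E2) as [w [b' E]]. eapply NoPar; eauto. }
  exists f. split; [|split; auto].
  - intros i Hi. pose proof (Hr i Hi). pose proof (NI i Hi). rewrite SN in *. unfold N in *. lia.
  - intros a c b E. pose proof (pat_range _ _ _ _ E) as [Ra Rc]. specialize (He _ _ _ E).
    destruct (pe p c).
    + apply TE in He. destruct He as [He|He]; auto. exfalso. apply (NI a); tauto.
    + destruct He as [d [E1 E2]]. apply TE in E1. destruct E1 as [E1|E1]; [|exfalso; apply (NI a); tauto].
      exists d. split; auto. apply DX; auto. intros ->. apply XR in E1. unfold N in E1. lia.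
Qed.

Lemma z3_pat p X : friendly p -> contains (bot X) p -> contains X p.
Proof.
  intros [[[a0 Hk] [c0 Hkc]] [Fii Fiii]] H. unf_contains H.
  set (N := tsize X + 1).
  assert (SN : tsize (bot X) = N) by (rewrite bot_ins, tsize_ins; unfold N; lia).
  assert (TE : forall a c b, edge (bot X) a c b -> edge X a c b \/ (a = tsize X /\ c = N /\ b = false)).
  { intros a c b E. unfold edge in E. apply edges_bot in E. destruct E as [E|[_ E2]]; auto.
    inversion E2; subst. right. unfold N. simpl. lia. }
  assert (XR : forall a c b, edge X a c b -> a <= tsize X /\ c <= tsize X).
  { intros a c b E. apply edge_range in E. lia. }
  assert (NC : forall c b, ~ edge (bot X) N c b).
  { intros c b E. apply TE in E. destruct E as [E|E]; [apply XR in E|]; unfold N in *; lia. }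
  assert (DN : forall x, desc (bot X) N x -> x = N).
  { intros x D. apply clos_rt_rt1n_iff in D. destruct D as [|y z [b E] _]; auto.
    exfalso; eapply NC; eauto. }
  assert (DX : forall u x, x <> N -> desc (bot X) u x -> desc X u x).
  { intros u x ne D. apply clos_rt_rt1n_iff in D. induction D; [apply rt_refl|].
    destruct H as [b E]. apply TE in E. destruct E as [E|E].
    - eapply rt_trans; [apply rt_step; exists b; eauto|]. apply IHD; auto.
    - exfalso. destruct E as [_ [-> _]]. apply ne. apply DN. apply clos_rt_rt1n_iff. auto. }
  assert (NI : forall a, 1 <= a <= tsize (pat p) -> f a <> N).
  { intros a Ha Hfa.
    assert (NoCh : forall y b, ~ edge (pat p) a y b).
    { intros y b E. specialize (He _ _ _ E). destruct (pe p y).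
      - rewrite Hfa in He. eapply NC; eauto.
      - destruct He as [d [E1 _]]. rewrite Hfa in E1. eapply NC; eauto. }
    destruct (Nat.eq_dec a (tsize (pat p))) as [ek|nk].
    - subst a. eapply NoCh; eauto.
    - destruct (left_anc 0 (pat p) a) as [z [d [E1 E2]]]; [lia|intros y; apply NoCh|].
      destruct (emb_edge _ _ _ _ _ _ He E1) as [d' [E3 E4]].
      assert (D := emb_desc _ _ _ _ _ He E2). change (desc (bot X) (f d) (f a)) in D.
      rewrite Hfa in D.
      assert (D' : desc (bot X) d' N) by (eapply rt_trans; eauto).
      pose proof (edge_ord _ _ _ _ _ _ E3 D'). simpl in H.
      pose proof (pat_range _ _ _ _ E1) as [Rz _]. specialize (Hr z Rz). rewrite SN in Hr. lia. }
  exists f. split; [|split; auto].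
  - intros i Hi. pose proof (Hr i Hi). pose proof (NI i Hi). rewrite SN in *. unfold N in *. lia.
  - intros a c b E. pose proof (pat_range _ _ _ _ E) as [Ra Rc]. specialize (He _ _ _ E).
    destruct (pe p c).
    + apply TE in He. destruct He as [He|He]; auto. exfalso. apply (NI c); tauto.
    + destruct He as [d [E1 E2]]. apply TE in E1. destruct E1 as [E1|E1].
      * exists d. split; [exact E1|]. apply DX; [apply NI; auto|exact E2].
      * exfalso. destruct E1 as [_ [-> _]]. apply DN in E2. apply (NI c); auto.
Qed.

Lemma z1_pat p X i : friendly p -> contains X p -> contains (ins i X) p.
Proof.
  intros [[[a0 Hk] [c0 Hkc]] [Fii Fiii]] H. unf_contains H.
  set (N := tsize X + 1). set (k := tsize (pat p)).
  assert (SN : tsize (ins i X) = N) by (rewrite tsize_ins; unfold N; lia).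
  assert (E1 : forall a c b, edge X a c b -> edge (ins i X) a c b \/
      (b = false /\ edge (ins i X) a N false /\ edge (ins i X) N c true /\ desc X c (tsize X))).
  { intros a c b E. unfold edge. apply (edges_ins 0 X i a c b) in E. simpl in E. exact E. }
  assert (E3 : forall u x, desc X u x -> desc (ins i X) u x).
  { intros u x D. induction D; [|apply rt_refl|eapply rt_trans; eauto].
    destruct H as [b E]. apply E1 in E. destruct E as [E|[_ [Ea [Eb _]]]].
    - apply rt_step. exists b; auto.
    - eapply rt_trans; apply rt_step; eexists; eauto. }
  assert (XR : forall a c b, edge X a c b -> 1 <= a <= tsize X /\ 1 <= c <= tsize X).
  { intros a c b E. apply edge_range in E. lia. }
  assert (GoodE : forall x y b, edge (pat p) x y b -> pe p y = false ->
     exists d, edge (ins i X) (f x) d b /\ desc (ins i X) d (f y)).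
  { intros x y b E Hy. specialize (He _ _ _ E). rewrite Hy in He.
    destruct He as [d [Ed Dd]]. apply E1 in Ed. destruct Ed as [Ed|[-> [Ea [Eb _]]]].
    - exists d. split; [exact Ed|apply E3; exact Dd].
    - exists N. split; [exact Ea|]. eapply rt_trans; [apply rt_step; exists true; exact Eb|apply E3; exact Dd]. }
  destruct (classic (exists a c, edge (pat p) a c false /\ pe p c = true /\
                      ~ edge (ins i X) (f a) (f c) false)) as [[a [c [Eac [Pc NE]]]]|NB].
  2:{ exists f. split; [|split; auto].
      - intros j Hj. rewrite SN. specialize (Hr j Hj). unfold N. lia.
      - intros x y b E. destruct (pe p y) eqn:Py.
        + specialize (He _ _ _ E). rewrite Py in He. apply E1 in He.
          destruct He as [He|[-> _]]; auto.
          destruct (classic (edge (ins i X) (f x) (f y) false)) as [|n]; auto.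
          exfalso. apply NB. exists x, y. auto.
        + apply GoodE; auto. }
  pose proof (He _ _ _ Eac) as Hac. rewrite Pc in Hac.
  destruct (E1 _ _ _ Hac) as [C|[_ [EaN [ENc Dc]]]]; [contradiction|].
  pose proof (pat_range _ _ _ _ Eac) as [Ra Rc].
  assert (Hac' := edge_range _ _ _ _ _ Eac). simpl in Hac'.
  assert (S1 : forall z d, edge (pat p) z d true -> ~ desc (pat p) d a).
  { intros z d Ez Dd. destruct (emb_edge _ _ _ _ _ _ He Ez) as [d' [E4 E5]].
    assert (D := emb_desc _ _ _ _ _ He Dd). change (desc X (f d) (f a)) in D.
    assert (D' : desc X d' (tsize X)).
    { eapply rt_trans; [exact E5|]. eapply rt_trans; [exact D|].
      eapply rt_trans; [apply rt_step; exists false; exact Hac|exact Dc]. }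
    pose proof (edge_ord _ _ _ _ _ _ E4 D'). simpl in H.
    pose proof (pat_range _ _ _ _ Ez) as [Rz _]. specialize (Hr z Rz). lia. }
  destruct (right_branch 0 (pat p) a) as [r [Hroot Rr]]; [lia|exact S1|].
  assert (NoRc : forall y, ~ edge (pat p) c y false).
  { intros y Ey. assert (pe p c = false); [|congruence].
    apply (Fii r c Hroot).
    - eapply rt_trans; [exact Rr|apply rt_step; exact Eac].
    - eapply root_not_child; eauto.
    - eauto. }
  assert (Ck : c = k).
  { destruct (Nat.eq_dec c k) as [|ne]; auto. exfalso.
    destruct (left_anc 0 (pat p) c) as [z [d [Ez Dd]]]; [unfold k in *; lia|exact NoRc|].
    destruct (Nat.eq_dec d c) as [->|ne2].
    - destruct (uniq_parent _ _ _ _ _ _ _ Ez Eac). discriminate.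
    - destruct (rt_last _ _ _ Dd ne2) as [w [Dw [b' Ew]]].
      destruct (uniq_parent _ _ _ _ _ _ _ Ew Eac) as [-> _]. eapply S1; eauto. }
  subst c.
  exists (fun j => if Nat.eqb j k then N else f j). split; [|split].
  - intros j Hj. rewrite SN. destruct (Nat.eqb_spec j k); [unfold N; lia|]. specialize (Hr j Hj). unfold N; lia.
  - intros j j' Hj Hj'. destruct (Nat.eqb_spec j k), (Nat.eqb_spec j' k); try congruence.
    + intros E. specialize (Hr j' Hj'). unfold N in *. lia.
    + intros E. specialize (Hr j Hj). unfold N in *. lia.
    + apply Hinj; auto.
  - intros x y b E. pose proof (edge_range _ _ _ _ _ E) as Rxy. simpl in Rxy.
    destruct (Nat.eqb_spec y k) as [->|ny].
    + destruct (uniq_parent _ _ _ _ _ _ _ E Eac) as [-> ->].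
      rewrite Pc. destruct (Nat.eqb_spec a k); [lia|]. exact EaN.
    + destruct (Nat.eqb_spec x k) as [->|nx].
      * destruct b; [|unfold k in *; lia].
        rewrite (Fiii y Pc E). exists (f k). split; [exact ENc|].
        apply E3. destruct (emb_edge _ _ _ _ _ _ He E) as [d0 [E4 E5]].
        eapply rt_trans; [apply rt_step; exists true; exact E4|exact E5].
      * destruct (pe p y) eqn:Py; [|apply GoodE; auto].
        specialize (He _ _ _ E). rewrite Py in He. apply E1 in He.
        destruct He as [He|[-> [Ea [Eb _]]]]; auto.
        exfalso. destruct (uniq_parent _ _ _ _ _ _ _ Ea EaN) as [Hxa _].
        pose proof (pat_range _ _ _ _ E) as [Rx Ry].
        assert (x = a) by (apply Hinj; auto). subst x.
        pose proof (uniq_child _ _ _ _ _ _ Eb ENc) as Hyk.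
        apply ny. apply Hinj; auto; unfold k; lia.
Qed.

Definition Lbool (pats : list pattern) (n : nat) (T : tree) : bool :=
  if excluded_middle_informative (Ln pats n T) then true else false.

Lemma zig_Ln pats : (forall p, In p pats -> friendly p) -> zig (Ln pats) (Lbool pats).
Proof.
  intros F. constructor.
  - intros n T. unfold Lbool. destruct (excluded_middle_informative (Ln pats n T)); split; auto; congruence.
  - intros n T [H _]. auto.
  - intros m T [HS HA]. assert (NL : T <> Leaf) by (intros ->; simpl in HS; lia).
    destruct (ins_rem T NL) as [E1 _]. split.
    + rewrite <- E1 in HS. rewrite tsize_ins in HS. lia.
    + intros p Hp Hc. apply (HA p Hp). rewrite <- E1. apply z1_pat; auto.
  - intros m X [HS HA]. split; [rewrite tsize_ins; lia|].
    intros p Hp Hc. rewrite ins0 in Hc. apply (HA p Hp). apply z2_pat; auto.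
  - intros m X [HS HA]. split; [rewrite tsize_ins; lia|].
    intros p Hp Hc. rewrite <- bot_ins in Hc. apply (HA p Hp). apply z3_pat; auto.
  - split; auto. intros p Hp. apply contains_leaf; auto.
Qed.

Theorem theorem3 (pats : list pattern) (n : nat) :
  (forall p, In p pats -> friendly p) ->
  (exists vis, S_complete (Ln pats n) (right_path n) vis) /\
  (forall vis, S_complete (Ln pats n) (right_path n) vis ->
     NoDup vis /\ forall T, In T vis <-> Ln pats n T).
Proof.
  intros F. apply (good_run (Ln pats n) (Jn (Lbool pats) n)).
  apply (zig_good (Ln pats) (Lbool pats) (zig_Ln pats F) n).
Qed.
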